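(* Let $P$ be a poset with least element $0$. Then the strong metric dimension $\mathrm{sdim}_M(G(P))$ is finite if and only if $G(P)$ is a finite graph.
   Context: For a poset $P$ with $0$ and $A\subseteq P$, $A^{\ell}=\{b\in P: b\le a \text{ for all } a\in A\}$. $Z^*(P)$ is the set of nonzero $a\in P$ for which some nonzero $b$ satisfies $\{a,b\}^{\ell}=\{0\}$. The zero-divisor graph $G(P)$ has vertex set $Z^*(P)$, distinct $a,b$ adjacent iff $\{a,b\}^{\ell}=\{0\}$. In a connected graph $G$, a vertex $w$ strongly resolves vertices $u,v$ if some shortest $u$–$w$ path contains $v$ or some shortest $v$–$w$ path contains $u$. A set $W\subseteq V(G)$ is a strong resolving set if every pair of vertices is strongly resolved by some vertex of $W$; $\mathrm{sdim}_M(G)$ is the minimum cardinality of a strong resolving set. *)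

(* Defs.v *)
From HB Require Import structures.
From mathcomp Require Import all_boot all_order.
Set Implicit Arguments. Unset Strict Implicit. Unset Printing Implicit Defensive.
Import Order.TTheory.
Local Open Scope order_scope.

(* A poset P with least element 0 is modelled as T : bPOrderType d, 0 = \bot. *)
Section ZeroDivisorGraph.
Context {d : Order.disp_t} {T : bPOrderType d}.

Definition lower_zero (a b : T) : Prop :=
  forall c : T, c <= a -> c <= b -> c = \bot.

Definition Zstar (a : T) : Prop :=
  a != \bot /\ exists b : T, b != \bot /\ lower_zero a b.

Definition zadj (a b : T) : Prop :=
  [/\ Zstar a, Zstar b, a != b & lower_zero a b].

(* a walk u = x0, x1, ..., xk = v in G(P), given as u and the list [x1;..;xk];
   its length is size p *)
Fixpoint is_walk (u : T) (p : seq T) (v : T) : Prop :=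
  match p with
  | [::] => u = v
  | x :: p' => zadj u x /\ is_walk x p' v
  end.

Definition shortest_walk (u : T) (p : seq T) (v : T) : Prop :=
  is_walk u p v /\ forall q : seq T, is_walk u q v -> size p <= size q.

Definition strongly_resolves (w u v : T) : Prop :=
  (exists p, shortest_walk u p w /\ v \in u :: p) \/
  (exists p, shortest_walk v p w /\ u \in v :: p).

Definition strong_resolving_set (W : seq T) : Prop :=
  (forall w, w \in W -> Zstar w) /\
  forall u v, Zstar u -> Zstar v -> u != v ->
    exists2 w, w \in W & strongly_resolves w u v.

(* sdim_M(G(P)) is finite: some strong resolving set is finite *)
Definition sdim_finite : Prop := exists W : seq T, strong_resolving_set W.

Definition zgraph_finite : Prop := exists s : seq T, forall a, Zstar a -> a \in s.

End ZeroDivisorGraph.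

(* Main.v *)
Require Import Defs.
From mathcomp Require Import all_boot all_order.
From Stdlib Require Import Classical.
Set Implicit Arguments. Unset Strict Implicit. Unset Printing Implicit Defensive.
Import Order.TTheory.

Section Aux.
Context {d : Order.disp_t} {T : bPOrderType d}.
Local Open Scope order_scope.

Lemma lz_sym (a b : T) : lower_zero a b -> lower_zero b a.
Proof. by move=> H c h1 h2; apply: H. Qed.

Lemma lz_self (a : T) : lower_zero a a -> a = \bot.
Proof. by move=> H; apply: H. Qed.

Lemma walk_in (u v : T) p : is_walk u p v -> v \in u :: p.
Proof.
elim: p u => [|x p IH] u /=; first by move=> ->; rewrite mem_head.
by case=> _ /IH; rewrite !inE => /orP [->|->]; rewrite !orbT.
Qed.

Lemma walk_cat (u w x : T) p1 p2 : is_walk u (p1 ++ x :: p2) w -> is_walk x p2 w.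
Proof. by elim: p1 u => [|y p1 IH] u /= [] // _ /IH. Qed.

Lemma connected (x y : T) : Zstar x -> Zstar y ->
  exists p, is_walk x p y /\ (size p <= 3)%N.
Proof.
move=> Zx Zy.
case: (eqVneq x y) => [<-|nxy]; first by exists [::].
have Zx' := Zx; have Zy' := Zy.
case: Zx' => nx [x' [nx' lxx']].
case: Zy' => ny [y' [ny' lyy']].
have Zx'Z : Zstar x' by split=> //; exists x; split=> //; exact: lz_sym.
have Zy'Z : Zstar y' by split=> //; exists y; split=> //; exact: lz_sym.
have nxx' : x != x'.
  apply/eqP=> E; move: lxx'; rewrite -E => /lz_self /eqP; by rewrite (negbTE nx).
have nyy' : y != y'.
  apply/eqP=> E; move: lyy'; rewrite -E => /lz_self /eqP; by rewrite (negbTE ny).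
case: (classic (lower_zero x' y')) => [l|nl].
  have nx'y' : x' != y'.
    apply/eqP=> E; move: l; rewrite -E => /lz_self /eqP; by rewrite (negbTE nx').
  exists [:: x'; y'; y]; split=> //=; split; first by split.
  split; first by split.
  split=> //; split=> //; first by rewrite eq_sym. exact: lz_sym.
have [c [cx' [cy' nc]]] : exists c, c <= x' /\ c <= y' /\ c != \bot.
  apply: NNPP => H; apply: nl => c h1 h2; apply: NNPP => hc; apply: H.
  by exists c; split=> //; split=> //; apply/eqP.
have lxc : lower_zero x c by move=> e h1 h2; apply: lxx' => //; exact: le_trans cx'.
have lcy : lower_zero c y.
  by move=> e h1 h2; apply: lyy' => //; exact: le_trans cy'.
have Zc : Zstar c by split=> //; exists x; split=> //; exact: lz_sym.
have nxc : x != c.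
  apply/eqP=> E; move: lxc; rewrite -E => /lz_self /eqP; by rewrite (negbTE nx).
have ncy : c != y.
  apply/eqP=> E; move: lcy; rewrite E => /lz_self /eqP; by rewrite (negbTE ny).
by exists [:: c; y].
Qed.

Lemma shortest_ex (u w : T) p : is_walk u p w ->
  exists q, shortest_walk u q w /\ (size q <= size p)%N.
Proof.
move: {2}(size p) (leqnn (size p)) => n; elim: n p => [|n IH] p.
  rewrite leqn0 => /eqP Hs hw; exists p; split=> //; split=> // q _.
  by rewrite Hs.
move=> hp hw.
case: (classic (exists q, is_walk u q w /\ (size q < size p)%N)).
  move=> [q [hq sq]].
  have sqn : (size q <= n)%N by rewrite -ltnS (leq_trans sq hp).
  have [r [hr sr]] := IH q sqn hq.
  by exists r; split=> //; rewrite (leq_trans sr (ltnW sq)).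
move=> H; exists p; split=> //; split=> // q hq.
by apply: NNPP => hn; apply: H; exists q; split=> //; rewrite ltnNge; apply/negP.
Qed.


Lemma fin_sep (D : T -> T -> nat -> Prop) (W : seq T) (S : T -> Prop) :
  (forall u w, S u -> w \in W -> exists k, (k < 4)%N /\ D u w k) ->
  (forall u w k j, S u -> w \in W -> D u w k -> D u w j -> k = j) ->
  (forall u v, S u -> S v -> (forall w k, w \in W -> D u w k -> D v w k) -> u = v) ->
  exists s : seq T, forall u, S u -> u \in s.
Proof.
elim: W S => [|w W IH] S Htot Hfun Hsep.
  case: (classic (exists a, S a)) => [[a Sa]|N].
    by exists [:: a] => u Su; rewrite (Hsep u a) ?mem_head.
  by exists [::] => u Su; case: N; exists u.
have Hk k : exists s : seq T, forall u, S u /\ D u w k -> u \in s.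
  apply: IH.
  - by move=> u w' [Su _] hw'; apply: Htot => //; rewrite inE hw' orbT.
  - by move=> u w' k' j [Su _] hw'; apply: Hfun => //; rewrite inE hw' orbT.
  move=> u v [Su Du] [Sv Dv] H; apply: Hsep => // w' k' hw' Dk.
  move: hw' Dk; rewrite inE => /orP [/eqP ->|hw'] Dk; last exact: H.
  by rewrite -(Hfun u w k k' Su (mem_head _ _) Du Dk).
have [s0 h0] := Hk 0; have [s1 h1] := Hk 1; have [s2 h2] := Hk 2; have [s3 h3] := Hk 3.
exists (s0 ++ s1 ++ s2 ++ s3) => u Su.
have [k [hk Dk]] := Htot u w Su (mem_head _ _).
rewrite !mem_cat.
case: k hk Dk => [|[|[|[|k]]]] // _ Dk.
- by rewrite h0.
- by rewrite h1 ?orbT.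
- by rewrite h2 ?orbT.
- by rewrite h3 ?orbT.
Qed.


Lemma key (a b w : T) p q : shortest_walk a p w -> b \in p ->
  shortest_walk b q w -> (size q < size p)%N.
Proof.
move=> [hp _] /splitPr E; case: E hp => p1 p2 hp [_ hq].
have := hq _ (walk_cat hp); rewrite size_cat /= => h.
apply: (leq_ltn_trans h); rewrite addnS ltnS; exact: leq_addl.
Qed.

Lemma filt (s : seq T) : exists W : seq T,
  (forall w, w \in W -> Zstar w) /\ forall a, Zstar a -> a \in s -> a \in W.
Proof.
elim: s => [|x s [W [h1 h2]]]; first by exists [::].
case: (classic (Zstar x)) => Zx.
  exists (x :: W); split.
    by move=> w; rewrite inE => /orP [/eqP ->|/h1].
  by move=> a Za; rewrite !inE => /orP [->|/(h2 _ Za) ->] //; rewrite orbT.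
exists W; split=> // a Za; rewrite inE => /orP [/eqP E|]; last exact: h2.
by case: Zx; rewrite -E.
Qed.

End Aux.

Theorem mainTheorem2 (d : Order.disp_t) (T : bPOrderType d) :
  @sdim_finite d T <-> @zgraph_finite d T.
Proof.
split.
  move=> [W [HW Hres]].
  pose D (u w : T) k := exists p, shortest_walk u p w /\ size p = k.
  have Hfun : forall u w k j, Zstar u -> w \in W -> D u w k -> D u w j -> k = j.
    move=> u w k j _ _ [p [[wp hp] <-]] [q [[wq hq] <-]].
    by apply/eqP; rewrite eqn_leq; apply/andP; split; [apply: hp | apply: hq].
  have Htot : forall u w, Zstar u -> w \in W -> exists k, (k < 4)%N /\ D u w k.
    move=> u w Zu hw; have [p [hp sp]] := connected Zu (HW w hw).
    have [q [hq sq]] := shortest_ex hp.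
    by exists (size q); split; [apply: leq_ltn_trans sq _ | exists q].
  apply: (fin_sep Htot Hfun) => u v Zu Zv H.
  apply: NNPP => nuv; have /eqP nuv' := nuv.
  have [w hw [[p [sp vp]]|[p [sp up]]]] := Hres u v Zu Zv nuv'.
    have vp' : v \in p by move: vp; rewrite inE (negbTE (introN eqP (nesym nuv))).
    have [q [sq eq]] := H w (size p) hw (ex_intro _ p (conj sp erefl)).
    by have := key sp vp' sq; rewrite eq ltnn.
  have up' : u \in p by move: up; rewrite inE (negbTE nuv').
  have [k [_ [r [sr er]]]] := Htot u w Zu hw.
  have [q [sq eq]] := H w k hw (ex_intro _ r (conj sr er)).
  have := key sp up' sr.
  have : (size p <= size q)%N by apply: (proj2 sp); case: sq.
  by rewrite eq -er => h1 h2; have := leq_ltn_trans h1 h2; rewrite ltnn.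
move=> [s Hs]; have [W [h1 h2]] := filt s.
exists W; split=> // u v Zu Zv nuv.
exists v; first by apply: h2 => //; apply: Hs.
have [p [hp _]] := connected Zu Zv.
have [q [hq _]] := shortest_ex hp.
left; exists q; split=> //; exact: walk_in (proj1 hq).
Qed.
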